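(* Let $p$ be an odd prime, $q\in\mathbb{C}_p$ with $|1-q|_p<p^{-1/(p-1)}$, and let $\chi$ be a primitive Dirichlet character with conductor $p$. Then for every integer $n\ge0$, $$\frac{2}{[2]_q}E_{n,\chi,q}\equiv\sum_{a=0}^{p-1}\chi(a)(-1)^a[a]_q^n\pmod{[p]_q},$$ i.e. $\left|\frac{2}{[2]_q}E_{n,\chi,q}-\sum_{a=0}^{p-1}\chi(a)(-1)^a[a]_q^n\right|_p\le|[p]_q|_p$.
   Context: $\mathbb{C}_p$ is the completion of an algebraic closure of $\mathbb{Q}_p$, with absolute value $|\cdot|_p$ normalized by $|p|_p=1/p$. For $x\in\mathbb{Z}_p$ put $[x]_q=\frac{1-q^x}{1-q}$. For a Dirichlet character $\chi$ of odd conductor $d$, the generalized $q$-Euler numbers are $E_{n,\chi,q}=\frac{[2]_q}{2}\lim_{N\to\infty}\sum_{x=0}^{dp^N-1}\chi(x)(-1)^x[x]_q^n$; equivalently $\sum_{n\ge0}E_{n,\chi,q}\frac{t^n}{n!}=[2]_q\sum_{m\ge0}\chi(m)(-1)^m e^{[m]_qt}$. Here $d=p$. *)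

(* Defs.v *)
From Stdlib Require Import Reals.
From HB Require Import structures.
From mathcomp Require Import all_boot all_order all_algebra.
Set Implicit Arguments. Unset Strict Implicit. Unset Printing Implicit Defensive.
Import GRing.Theory.
Local Open Scope ring_scope.

Definition converges (K : fieldType) (abs : K -> R) (u : nat -> K) (l : K) : Prop :=
  forall eps : R, Rlt R0 eps ->
    exists N : nat, forall m : nat, (N <= m)%N -> Rlt (abs (u m - l)) eps.

Definition cauchy (K : fieldType) (abs : K -> R) (u : nat -> K) : Prop :=
  forall eps : R, Rlt R0 eps ->
    exists N : nat, forall m k : nat, (N <= m)%N -> (N <= k)%N ->
      Rlt (abs (u m - u k)) eps.

(* abs is a complete non-archimedean absolute value on K with |p| = 1/p.
   Such a (K, abs) is a complete valued extension of Q_p; C_p is one. *)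
Record padic_abs (p : nat) (K : fieldType) (abs : K -> R) : Prop := {
  abs_ge0 : forall x, Rle R0 (abs x);
  abs_eq0 : forall x, abs x = R0 <-> x = 0;
  abs_mul : forall x y, abs (x * y) = Rmult (abs x) (abs y);
  abs_ultra : forall x y, Rle (abs (x + y)) (Rmax (abs x) (abs y));
  abs_p : abs (p%:R) = Rinv (INR p);
  abs_complete : forall u, cauchy abs u -> exists l, converges abs u l
}.

(* q-number [a]_q = (1 - q^a)/(1 - q) for a natural number a, written as
   1 + q + ... + q^(a-1) (which also covers q = 1). *)
Definition qint (K : fieldType) (q : K) (a : nat) : K := \sum_(i < a) q ^+ i.

Definition dirichlet_char (d : nat) (K : fieldType) (chi : nat -> K) : Prop :=
  [/\ chi 1%N = 1,
      forall m n : nat, chi (m * n)%N = chi m * chi n,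
      forall n : nat, chi (n + d)%N = chi n &
      forall n : nat, chi n = 0 <-> ~~ coprime n d].

Definition primitive_char (d : nat) (K : fieldType) (chi : nat -> K) : Prop :=
  dirichlet_char d chi /\
  forall d' : nat, (d' %| d)%N -> (d' < d)%N ->
    ~ (exists psi : nat -> K, dirichlet_char d' psi /\
         forall n : nat, coprime n d -> chi n = psi n).

Definition qEuler_partial (d : nat) (K : fieldType) (chi : nat -> K) (q : K)
    (n N : nat) : K :=
  \sum_(x < d * d ^ N) chi x * (-1) ^+ x * qint q x ^+ n.

Definition is_qEuler (d : nat) (K : fieldType) (abs : K -> R) (chi : nat -> K)
    (q : K) (n : nat) (E : K) : Prop :=
  exists L : K, converges abs (fun N => qEuler_partial d chi q n N) L /\
                E = qint q 2 / 2 * L.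

(* Main.v *)
Require Import Defs.
From Stdlib Require Import Reals Lra Psatz.
From HB Require Import structures.
From mathcomp Require Import all_boot all_order all_algebra all_fingroup all_solvable.
Import GRing.Theory.
Local Open Scope ring_scope.
Set Implicit Arguments. Unset Strict Implicit.
Local Notation R1 := Rdefinitions.R1.
Local Notation R0 := Rdefinitions.R0.

Lemma abs0 p (K : fieldType) (abs : K -> R) : padic_abs p abs -> abs 0 = R0.
Proof. by move=> H; apply/(abs_eq0 H). Qed.

Lemma abs1 p (K : fieldType) (abs : K -> R) : padic_abs p abs -> abs 1 = R1.
Proof.
move=> H.
have h := abs_mul H 1 1; rewrite mulr1 in h.
have h0 : abs 1 <> R0 by move/(abs_eq0 H)/eqP; rewrite oner_eq0.
have g := abs_ge0 H 1.
apply: (Rmult_eq_reg_l (abs 1)) => //; lra.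
Qed.

Lemma absN1 p (K : fieldType) (abs : K -> R) : padic_abs p abs -> abs (-1) = R1.
Proof.
move=> H.
have h := abs_mul H (-1) (-1); rewrite mulrNN mulr1 (abs1 H) in h.
have g := abs_ge0 H (-1); nra.
Qed.

Lemma absN p (K : fieldType) (abs : K -> R) x : padic_abs p abs -> abs (- x) = abs x.
Proof. by move=> H; rewrite -mulN1r (abs_mul H) (absN1 H) Rmult_1_l. Qed.

Lemma abs_sub p (K : fieldType) (abs : K -> R) x y : padic_abs p abs ->
  Rle (abs (x - y)) (Rmax (abs x) (abs y)).
Proof. by move=> H; rewrite -(absN y H); exact: (abs_ultra H x (-y)). Qed.

Lemma abs_subC p (K : fieldType) (abs : K -> R) x y : padic_abs p abs ->
  abs (x - y) = abs (y - x).
Proof. by move=> H; rewrite -opprB (absN _ H). Qed.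

Lemma abs_add_le p (K : fieldType) (abs : K -> R) x y r : padic_abs p abs ->
  Rle (abs x) r -> Rle (abs y) r -> Rle (abs (x + y)) r.
Proof.
move=> H hx hy; apply: Rle_trans (abs_ultra H x y) _; by apply: Rmax_lub.
Qed.

Lemma abs_sub_le p (K : fieldType) (abs : K -> R) x y r : padic_abs p abs ->
  Rle (abs x) r -> Rle (abs y) r -> Rle (abs (x - y)) r.
Proof. move=> H hx hy; apply: (abs_add_le H) => //; by rewrite (absN _ H). Qed.

Lemma abs_mul_le p (K : fieldType) (abs : K -> R) x y r : padic_abs p abs ->
  Rle (abs x) R1 -> Rle (abs y) r -> Rle (abs (x * y)) r.
Proof.
move=> H hx hy; rewrite (abs_mul H).
have := abs_ge0 H x; have := abs_ge0 H y; nra.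
Qed.

Lemma abs_sum_le p (K : fieldType) (abs : K -> R) m (F : 'I_m -> K) r :
  padic_abs p abs -> Rle R0 r -> (forall i, Rle (abs (F i)) r) ->
  Rle (abs (\sum_(i < m) F i)) r.
Proof.
move=> H r0 hF; apply: (@big_ind K (fun x => Rle (abs x) r) 0 +%R).
- by rewrite (abs0 H).
- by move=> x y; apply: (abs_add_le H).
- by move=> i _; apply: hF.
Qed.

Lemma abs_nat p (K : fieldType) (abs : K -> R) n : padic_abs p abs ->
  Rle (abs (n%:R)) R1.
Proof.
move=> H; elim: n => [|n IH]; first by rewrite (abs0 H); lra.
rewrite -addn1 natrD; apply: (abs_add_le H) => //; rewrite (abs1 H); lra.
Qed.

Lemma abs_exp_le p (K : fieldType) (abs : K -> R) x n : padic_abs p abs ->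
  Rle (abs x) R1 -> Rle (abs (x ^+ n)) R1.
Proof.
move=> H hx; elim: n => [|n IH]; first by rewrite expr0 (abs1 H); lra.
by rewrite exprS; apply: (abs_mul_le H).
Qed.

Lemma abs_exp p (K : fieldType) (abs : K -> R) x n : padic_abs p abs ->
  abs (x ^+ n) = pow (abs x) n.
Proof.
move=> H; elim: n => [|n IH]; first by rewrite expr0 (abs1 H).
by rewrite exprS (abs_mul H) IH.
Qed.

Lemma qintS (K : fieldType) (q : K) k : qint q k.+1 = qint q k + q ^+ k.
Proof. by rewrite /qint big_ord_recr. Qed.

Lemma qint_add (K : fieldType) (q : K) m k :
  qint q (m + k)%N = qint q m + q ^+ m * qint q k.
Proof.
elim: k => [|k IH]; first by rewrite addn0 /qint big_ord0 mulr0 addr0.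
by rewrite addnS !qintS IH mulrDr exprD addrA.
Qed.

Lemma qint_mul (K : fieldType) (q : K) M y :
  qint q (M * y)%N = qint q M * qint (q ^+ M) y.
Proof.
elim: y => [|y IH]; first by rewrite muln0 /qint !big_ord0 mulr0.
by rewrite mulnSr qint_add IH qintS mulrDr exprM; congr (_ + _); rewrite mulrC.
Qed.

Lemma one_sub_exp (K : fieldType) (q : K) m : 1 - q ^+ m = (1 - q) * qint q m.
Proof.
elim: m => [|m IH]; first by rewrite expr0 subrr /qint big_ord0 mulr0.
by rewrite qintS mulrDr -IH mulrBl mul1r exprS addrA subrK.
Qed.

Lemma abs_qint_le p (K : fieldType) (abs : K -> R) Q k : padic_abs p abs ->
  Rle (abs Q) R1 -> Rle (abs (qint Q k)) R1.
Proof.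
move=> H hQ; apply: (abs_sum_le H) => //; first lra.
by move=> i; exact: (abs_exp_le _ H hQ).
Qed.

Lemma sum_ord_add (K : fieldType) (g : nat -> K) a b :
  \sum_(x < a + b) g x = \sum_(x < a) g x + \sum_(x < b) g (a + x)%N.
Proof.
elim: b => [|b IH]; first by rewrite addn0 big_ord0 addr0.
by rewrite addnS !big_ord_recr /= IH addrA.
Qed.

Lemma sum_ord_mul (K : fieldType) (g : nat -> K) M k :
  \sum_(x < k * M) g x = \sum_(y < k) \sum_(a < M) g (y * M + a)%N.
Proof.
elim: k => [|k IH]; first by rewrite mul0n !big_ord0.
by rewrite mulSnr sum_ord_add IH big_ord_recr.
Qed.

Lemma abs_powdiff p (K : fieldType) (abs : K -> R) X Y n : padic_abs p abs ->
  Rle (abs X) R1 -> Rle (abs Y) R1 ->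
  Rle (abs (X ^+ n - Y ^+ n)) (abs (X - Y)).
Proof.
move=> H hX hY; elim: n => [|n IH].
  by rewrite !expr0 subrr (abs0 H); apply: (abs_ge0 H).
have -> : X ^+ n.+1 - Y ^+ n.+1 = X * (X ^+ n - Y ^+ n) + (X - Y) * Y ^+ n.
  by rewrite !exprS mulrBr mulrBl addrA subrK.
apply: (abs_add_le H); first by apply: (abs_mul_le H).
rewrite mulrC; apply: (abs_mul_le H); last exact: Rle_refl.
exact: (abs_exp_le _ H hY).
Qed.

Lemma chi_per d (K : fieldType) (chi : nat -> K) n k : dirichlet_char d chi ->
  chi (n + k * d)%N = chi n.
Proof.
case=> h1 hm hp h0; elim: k => [|k IH]; first by rewrite mul0n addn0.
by rewrite mulSnr addnA hp IH.
Qed.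

Lemma chi_mod d (K : fieldType) (chi : nat -> K) n : dirichlet_char d chi ->
  chi n = chi (n %% d)%N.
Proof. by move=> hc; rewrite {1}(divn_eq n d) addnC (chi_per _ _ hc). Qed.

Lemma chi_exp d (K : fieldType) (chi : nat -> K) a k : dirichlet_char d chi ->
  chi (a ^ k)%N = chi a ^+ k.
Proof.
case=> h1 hm hp h0; elim: k => [|k IH]; first by rewrite expn0 expr0.
by rewrite expnS hm IH exprS.
Qed.

Lemma abs_chi_le p (K : fieldType) (abs : K -> R) (chi : nat -> K) a :
  padic_abs p abs -> prime p -> dirichlet_char p chi -> Rle (abs (chi a)) R1.
Proof.
move=> H pp hc; have hc' := hc; case: hc' => h1 hm hp h0.
case: (boolP (coprime a p)) => cop; last first.
  have -> : chi a = 0 by apply/h0.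
  rewrite (abs0 H); lra.
set t := totient p.
have e : chi a ^+ t = 1.
  rewrite -(chi_exp _ _ hc) (chi_mod _ hc) (Euler_exp_totient cop).
  by rewrite modn_small ?prime_gt1.
have tp : (0 < t)%coq_nat by apply/ltP; rewrite totient_gt0 prime_gt0.
have e2 : pow (abs (chi a)) t = R1 by rewrite -(abs_exp _ _ H) e (abs1 H).
destruct (Rle_lt_dec (abs (chi a)) R1) as [l|l]; first done.
have := Rlt_pow_R1 _ _ l tp; lra.
Qed.

Lemma sum_sign (K : fieldType) m : odd m -> \sum_(y < m) ((-1) ^+ y : K) = 1.
Proof.
move=> hm; have -> : m = (m./2).*2.+1.
  by rewrite -{1}(odd_double_half m) hm add1n.
elim: (m./2) => [|k IH]; first by rewrite big_ord1 expr0.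
rewrite doubleS big_ord_recr /= big_ord_recr /= IH.
have e : (-1) ^+ (k.*2) = 1 :> K by rewrite -signr_odd odd_double.
by rewrite !exprS e !mulr1 mulrN1 opprK subrK.
Qed.

Lemma abs_sign p (K : fieldType) (abs : K -> R) y : padic_abs p abs ->
  Rle (abs ((-1) ^+ y)) R1.
Proof. move=> H; apply: (abs_exp_le _ H); rewrite (absN1 H); lra. Qed.

Definition Tsum (K : fieldType) (chi : nat -> K) (q : K) (n M : nat) : K :=
  \sum_(x < M) chi x * (-1) ^+ x * qint q x ^+ n.

Lemma core p (K : fieldType) (abs : K -> R) (chi : nat -> K) q n M :
  padic_abs p abs -> prime p -> odd p -> dirichlet_char p chi ->
  Rle (abs q) R1 -> (p %| M)%N -> odd M ->
  Rle (abs (Tsum chi q n (p * M) - Tsum chi q n M)) (abs (qint q M)).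
Proof.
move=> H pp op hc hq dM oM.
rewrite /Tsum (sum_ord_mul (fun x => chi x * (-1) ^+ x * qint q x ^+ n)).
set TM := \sum_(x < M) _.
have hT : TM = \sum_(y < p) (-1) ^+ y * TM by rewrite -mulr_suml sum_sign ?mul1r.
rewrite hT -sumrB; apply: (abs_sum_le H); first exact: (abs_ge0 H).
move=> y; rewrite /TM mulr_sumr -sumrB; apply: (abs_sum_le H); first exact: (abs_ge0 H).
move=> a.
have E1 : chi (y * M + a)%N = chi a.
  have -> : (y * M = (y * (M %/ p)) * p)%N by rewrite -mulnA divnK.
  by rewrite addnC (chi_per _ _ hc).
have E2 : (-1) ^+ (y * M + a)%N = (-1) ^+ y * (-1) ^+ a :> K.
  by rewrite exprD -signr_odd oddM oM andbT signr_odd.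
rewrite E1 E2.
set X := qint q (y * M + a)%N; set Y := qint q a.
set s : K := (-1) ^+ y; set t : K := (-1) ^+ a.
have -> : chi a * (s * t) * X ^+ n - s * (chi a * t * Y ^+ n)
    = (s * chi a * t) * (X ^+ n - Y ^+ n).
  by rewrite mulrBr !mulrA [chi a * s]mulrC.
have hs : Rle (abs s) R1 by apply: (abs_sign _ H).
have ht : Rle (abs t) R1 by apply: (abs_sign _ H).
have hch : Rle (abs (chi a)) R1 by apply: (abs_chi_le _ H pp hc).
apply: (abs_mul_le H).
  apply: (abs_mul_le H) => //; exact: (abs_mul_le H).
apply: Rle_trans (abs_powdiff _ H _ _) _.
- exact: (abs_qint_le _ H).
- exact: (abs_qint_le _ H).
have -> : X - Y = q ^+ a * (qint q M * qint (q ^+ M) y).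
  by rewrite /X /Y addnC qint_add mulnC qint_mul addrC addKr.
apply: (abs_mul_le H); first exact: (abs_exp_le _ H hq).
rewrite mulrC; apply: (abs_mul_le H); last exact: Rle_refl.
by apply: (abs_qint_le _ H); apply: (abs_exp_le _ H hq).
Qed.

Lemma abs_p_lt1 p (K : fieldType) (abs : K -> R) : padic_abs p abs -> prime p ->
  Rlt (abs (p%:R)) R1.
Proof.
move=> H pp; rewrite (abs_p H).
have h : Rlt R1 (INR p) by apply: (lt_INR 1 p); apply/ltP; exact: prime_gt1.
apply: (Rmult_lt_reg_l (INR p)); first lra.
rewrite Rinv_r; lra.
Qed.

Lemma qintQp_bound p (K : fieldType) (abs : K -> R) (Q : K) : padic_abs p abs ->
  Rle (abs Q) R1 ->
  Rle (abs (qint Q p)) (Rmax (abs (p%:R)) (abs (1 - Q))).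
Proof.
move=> H hQ.
have -> : qint Q p = p%:R + \sum_(i < p) (Q ^+ i - 1).
  by rewrite sumrB sumr_const card_ord addrC subrK.
apply: (abs_add_le H); first exact: Rmax_l.
apply: (abs_sum_le H).
  apply: Rle_trans (Rmax_l _ _); exact: (abs_ge0 H).
move=> i; rewrite (abs_subC _ _ H) one_sub_exp (abs_mul H).
apply: Rle_trans (Rmax_r _ _).
have := abs_qint_le i H hQ; have := abs_ge0 H (1 - Q); have := abs_ge0 H (qint Q i); nra.
Qed.

Lemma qint_pow_bound p (K : fieldType) (abs : K -> R) (q : K) N : padic_abs p abs ->
  Rle (abs q) R1 ->
  Rle (abs (qint q (p ^ N)%N)) (pow (Rmax (abs (p%:R)) (abs (1 - q))) N).
Proof.
move=> H hq; elim: N => [|N IH].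
  rewrite expn0 /qint big_ord1 expr0 (abs1 H) /=; lra.
rewrite expnSr qint_mul (abs_mul H) /=.
have hQ : Rle (abs (q ^+ (p ^ N)%N)) R1 by apply: (abs_exp_le _ H).
have h1 := qintQp_bound H hQ.
have h2 : Rle (abs (1 - q ^+ (p ^ N)%N)) (abs (1 - q)).
  rewrite one_sub_exp (abs_mul H); have := abs_qint_le (p ^ N)%N H hq.
  have := abs_ge0 H (1 - q); have := abs_ge0 H (qint q (p ^ N)%N); nra.
have h3 : Rle (abs (qint (q ^+ (p ^ N)%N) p)) (Rmax (abs (p%:R)) (abs (1 - q))).
  apply: Rle_trans h1 _; apply: Rle_max_compat_l => //.
have := abs_ge0 H (qint q (p ^ N)%N); have := abs_ge0 H (qint (q ^+ (p ^ N)%N) p).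
nra.
Qed.

Lemma tele1 p (K : fieldType) (abs : K -> R) (u : nat -> K) r : padic_abs p abs ->
  (forall N, Rle (abs (u N.+1 - u N)) r) -> Rle R0 r ->
  forall N, Rle (abs (u N - u 0%N)) r.
Proof.
move=> H hu r0; elim=> [|N IH]; first by rewrite subrr (abs0 H).
have -> : u N.+1 - u 0%N = (u N.+1 - u N) + (u N - u 0%N) by rewrite addrA subrK.
exact: (abs_add_le H).
Qed.

Lemma tele2 p (K : fieldType) (abs : K -> R) (u : nat -> K) c : padic_abs p abs ->
  (forall N, Rle (abs (u N.+1 - u N)) (pow c N)) -> Rle R0 c -> Rle c R1 ->
  forall m k, Rle (abs (u (m + k)%N - u m)) (pow c m).
Proof.
move=> H hu c0 c1 m; elim=> [|k IH].
  by rewrite addn0 subrr (abs0 H); apply: pow_le.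
have -> : u (m + k.+1)%N - u m = (u (m + k).+1 - u (m + k)%N) + (u (m + k)%N - u m).
  by rewrite addnS addrA subrK.
apply: (abs_add_le H) => //; apply: Rle_trans (hu _) _.
rewrite pow_add; have : Rle (pow c k) R1.
  have e : pow R1 k = R1 by elim: (k) => [|k' /= ->] //; apply: Rmult_1_r.
  by rewrite -e; apply: pow_incr; lra.
have := pow_le c m c0; have := pow_le c k c0; nra.
Qed.

Lemma lim_bound p (K : fieldType) (abs : K -> R) (u : nat -> K) L r : padic_abs p abs ->
  converges abs u L -> (forall N, Rle (abs (u N - u 0%N)) r) ->
  Rle (abs (L - u 0%N)) r.
Proof.
move=> H hc hb.
destruct (Rle_lt_dec (abs (L - u 0%N)) r) as [l|l]; first done.
have ep : Rlt R0 (Rminus (abs (L - u 0%N)) r) by apply: Rlt_Rminus.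
have [N hN] := hc _ ep.
have h1 := hN N (leqnn N); have h2 := hb N.
have e : L - u 0%N = (L - u N) + (u N - u 0%N) by rewrite addrA subrK.
have h3 := abs_ultra H (L - u N) (u N - u 0%N).
rewrite -e (abs_subC L (u N) H) in h3.
have r0 : Rle R0 r := Rle_trans _ _ _ (abs_ge0 H _) h2.
move: h3; rewrite /Rmax; case: Rle_dec => _ h3; first exact: Rle_trans h3 h2.
have := Rle_lt_trans _ _ _ h3 h1; lra.
Qed.

Lemma step p (K : fieldType) (abs : K -> R) (chi : nat -> K) q n N :
  padic_abs p abs -> prime p -> odd p -> dirichlet_char p chi ->
  Rle (abs q) R1 ->
  Rle (abs (qEuler_partial p chi q n N.+1 - qEuler_partial p chi q n N))
      (abs (qint q (p * p ^ N)%N)).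
Proof.
move=> H pp op hc hq.
have oM : odd (p * p ^ N)%N by rewrite oddM oddX op orbT.
have := @core p K abs chi q n (p * p ^ N)%N H pp op hc hq (dvdn_mulr _ (dvdnn p)) oM.
by rewrite /Tsum /qEuler_partial expnS.
Qed.

Lemma abs2 p (K : fieldType) (abs : K -> R) : padic_abs p abs -> prime p -> odd p ->
  Rle R1 (abs (2 : K)).
Proof.
move=> H pp op.
destruct (Rle_lt_dec R1 (abs (2 : K))) as [l|l]; first done.
exfalso.
have hp : p = ((p./2).*2.+1)%N by rewrite -{1}(odd_double_half p) op add1n.
have e : (1 : K) = p%:R - 2 * (p./2)%:R.
  set k := p./2 in hp *.
  by rewrite hp -addn1 -addnn !natrD mulrDl mul1r [_ + 1]addrC addrK.
have h := abs_sub (p%:R) (2 * (p./2)%:R) H; rewrite -e (abs1 H) in h.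
have hp1 := abs_p_lt1 H pp.
have h2 : Rle (abs (2 * (p./2)%:R : K)) (abs (2 : K)).
  rewrite mulrC; apply: (abs_mul_le H); [exact: (abs_nat _ H) | exact: Rle_refl].
move: h; rewrite /Rmax; case: Rle_dec => _ h.
  exact: (Rlt_irrefl _ (Rle_lt_trans _ _ _ (Rle_trans _ _ _ h h2) l)).
exact: (Rlt_irrefl _ (Rle_lt_trans _ _ _ h hp1)).
Qed.

Unset Implicit Arguments.

Theorem mainTheorem5 (p : nat) (K : fieldType) (abs : K -> R) (q : K)
    (chi : nat -> K) :
  prime p -> odd p -> padic_abs p abs ->
  Rlt (abs (1 - q)) (Rpower (INR p) (Ropp (Rinv (INR (p - 1))))) ->
  primitive_char p chi ->
  forall n : nat, exists E : K, is_qEuler p abs chi q n E /\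
    Rle (abs (2 / qint q 2 * E
              - \sum_(a < p) chi a * (-1) ^+ a * qint q a ^+ n))
        (abs (qint q p)).
Proof.
move=> pp op H h1q [hc _] n.
have hpR : Rlt R1 (INR p) by apply: (lt_INR 1 p); apply/ltP; exact: prime_gt1.
have hpw : Rlt (Rpower (INR p) (Ropp (Rinv (INR (p - 1))))) R1.
  have h0 : Rlt R0 (INR (p - 1)).
    apply: lt_0_INR; apply/ltP; by rewrite subn_gt0 prime_gt1.
  have := Rpower_lt (INR p) _ R0 hpR (Ropp_lt_gt_0_contravar _ (Rinv_0_lt_compat _ h0)).
  rewrite Rpower_O; lra.
have h1q1 : Rlt (abs (1 - q)) R1 := Rlt_trans _ _ _ h1q hpw.
have hq : Rle (abs q) R1.
  have -> : q = 1 - (1 - q) by rewrite opprB addrC subrK.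
  apply: (abs_sub_le H); [rewrite (abs1 H); exact: Rle_refl | exact: Rlt_le].
set c := Rmax (abs (p%:R : K)) (abs (1 - q)).
have c0 : Rle R0 c := Rle_trans _ _ _ (abs_ge0 H _) (Rmax_l _ _).
have c1 : Rlt c R1 by apply: Rmax_lub_lt => //; exact: abs_p_lt1.
set u := fun N => qEuler_partial p chi q n N.
have hs1 : forall N, Rle (abs (u N.+1 - u N)) (pow c N).
  move=> N; apply: Rle_trans (step n N H pp op hc hq) _.
  rewrite -expnS; apply: (Rle_trans _ _ _ (qint_pow_bound N.+1 H hq)).
  rewrite /= -/c; have := pow_le c N c0; nra.
have hs2 : forall N, Rle (abs (u N.+1 - u N)) (abs (qint q p)).
  move=> N; apply: Rle_trans (step n N H pp op hc hq) _.
  rewrite qint_mul (abs_mul H).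
  have := abs_qint_le (p ^ N)%N H (abs_exp_le p H hq).
  have := abs_ge0 H (qint q p); have := abs_ge0 H (qint (q ^+ p) (p ^ N)%N); nra.
have hcau : cauchy abs u.
  move=> eps ep.
  have [N0 hN0] := pow_lt_1_zero c ltac:(rewrite Rabs_pos_eq //) eps ep.
  exists N0 => m k hm hk.
  have e : u m - u k = (u m - u N0) - (u k - u N0) by rewrite opprB addrA subrK.
  have hb : forall j, (N0 <= j)%N -> Rle (abs (u j - u N0)) (pow c N0).
    move=> j hj; rewrite -(subnKC hj); exact: (tele2 H hs1 c0 (Rlt_le _ _ c1)).
  rewrite e; apply: Rle_lt_trans (abs_sub_le H (hb m hm) (hb k hk)) _.
  have := hN0 N0 (le_n N0); rewrite Rabs_pos_eq //; exact: pow_le.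
have [L hL] := abs_complete H hcau.
have h2 : (2 : K) != 0.
  apply/eqP => e2; have := abs2 H pp op; rewrite e2 (abs0 H); lra.
have Q2 : qint q 2 = 1 + q by rewrite /qint !big_ord_recr big_ord0 /= add0r expr0 expr1.
have hQ2 : qint q 2 != 0.
  rewrite Q2; apply/eqP => eq.
  have : q = -1 by apply/eqP; rewrite -addr_eq0 addrC eq.
  move=> eqq; have := abs2 H pp op.
  have -> : (2 : K) = 1 - q by rewrite eqq opprK.
  move=> h; exact: (Rlt_irrefl _ (Rle_lt_trans _ _ _ h h1q1)).
exists (qint q 2 / 2 * L); split; first by exists L.
rewrite !mulrA divfK // divff // mul1r.
have e0 : \sum_(a < p) chi a * (-1) ^+ a * qint q a ^+ n = u 0%N.
  by rewrite /u /qEuler_partial expn0 muln1.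
rewrite e0; apply: (lim_bound H hL).
apply: (tele1 H hs2); exact: (abs_ge0 H).
Qed.
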